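(* Let $n,m$ be integers with $0<m<n$. Let $f_n\in\mathcal{V}_n^m$, $g_n\in\mathcal{W}_n^m$, and $f_{3n}=f_n+g_n\in\mathcal{V}_{3n}^m$, with expansions $f_n=\sum_{k=1}^na_{n,k}\tilde\varphi_{n,k}^m$, $g_n=\sum_{h=1}^{2n}b_{n,h}\tilde\psi_{n,h}^m$, $f_{3n}=\sum_{j=1}^{3n}a_{3n,j}\tilde\varphi_{3n,j}^m$, and set $\vec a_n=(a_{n,k})_{k=1}^n$, $\vec b_n=(b_{n,h})_{h=1}^{2n}$, $\vec a_{3n}=(a_{3n,j})_{j=1}^{3n}$. Define $A\in\mathbb{R}^{n\times3n}$ and $B\in\mathbb{R}^{2n\times3n}$ by $$A_{k,j}=\sum_{s=0}^{n-m}\tau_{s,k}^n\tau_{s,j}^{3n}+\sum_{s=n-m+1}^{n-1}\tau_{s,k}^n\big[\mu_{n,s}^m\tau_{s,j}^{3n}-\mu_{n,2n-s}^m\tau_{2n-s,j}^{3n}\big],$$ $$B_{h,j}=\sum_{r=n}^{n+m-1}\frac{\sigma_{r,h}^n}{\sqrt{v_{n,r}^m}}\big[\mu_{n,r}^m\tau_{2n-r,j}^{3n}+\mu_{n,2n-r}^m\tau_{r,j}^{3n}\big]+\sum_{r=n+m}^{3n-m}\frac{\sigma_{r,h}^n}{\sqrt{v_{n,r}^m}}\tau_{r,j}^{3n}+\sum_{r=3n-m+1}^{3n-1}\sigma_{r,h}^n\sqrt{v_{n,r}^m}\,\tau_{r,j}^{3n}.$$ Then $\vec a_n=A\vec a_{3n}$,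 $\vec b_n=B\vec a_{3n}$, and $\vec a_{3n}=A^T\vec a_n+B^T\vec b_n$.
   Context: Let $w(x)=(1-x^2)^{-1/2}$ on $[-1,1]$, $\langle f,g\rangle_{L^2_w}=\int_{-1}^1fgw\,dx$. Orthonormal Chebyshev polynomials: $p_0=\sqrt{1/\pi}$, $p_r(x)=\sqrt{2/\pi}\cos(r\arccos x)$, $r\ge1$. Chebyshev nodes $x_k^N=\cos\frac{(2k-1)\pi}{2N}$, $k=1,\ldots,N$; $Y_n=\{x_k^{3n}\}_{k=1}^{3n}\setminus\{x_k^n\}_{k=1}^n=\{y_k^n:k=1,\ldots,2n\}$. For $0<m<N$: $\mu_{N,r}^m=1$ if $0\le r\le N-m$, $\frac{m+N-r}{2m}$ if $N-m<r<N+m$, $0$ otherwise; for $r=0,\ldots,N-1$: $q_{N,r}^m=p_r$ if $r\le N-m$, $q_{N,r}^m=\mu_{N,r}^mp_r-\mu_{N,2N-r}^mp_{2N-r}$ if $N-m<r<N$; $\nu_{N,r}^m=1$ if $r\le N-m$, $\frac{m^2+(N-r)^2}{2m^2}$ if $N-m<r<N$; $\tau_{r,k}^N=\sqrt{\frac{\pi}{N\nu_{N,r}^m}}p_r(x_k^N)$; $\tilde\varphi_{N,k}^m=\sum_{r=0}^{N-1}\tau_{r,k}^Nq_{N,r}^m$ ($k=1,\ldots,N$), an orthonormal basis of $\mathcal{V}_N^m=\mathrm{span}\{q_{N,r}^m\}_{r=0}^{N-1}$. $\mathcal{W}_n^m$ is the orthogonal complement of $\mathcal{V}_n^m$ in $\mathcal{V}_{3n}^m$.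 For $r=n,\ldots,3n-1$: $\tilde q_{n,r}^m=\mu_{n,r}^mp_{2n-r}+\mu_{n,2n-r}^mp_r$ if $n\le r<n+m$, $p_r$ if $n+m\le r\le3n-m$, $q_{3n,r}^m$ if $3n-m<r<3n$; $v_{n,r}^m=\frac{m^2+(n-r)^2}{2m^2}$ if $n<r<n+m$, $1$ if $r=n$ or $n+m\le r\le3n-m$, $\frac{m^2+(3n-r)^2}{2m^2}$ if $3n-m<r<3n$. For $k=1,\ldots,2n$: $\sigma_{r,k}^n=\sqrt{\frac{\pi}{3n}}\,c_{r,k}$ with $c_{r,k}=p_n(y_k^n)$ if $r=n$, $\frac{p_r(y_k^n)+p_{2n-r}(y_k^n)}{\sqrt2}$ if $n<r<2n$, $\frac{p_{2n}(y_k^n)+\sqrt2p_0(y_k^n)}{\sqrt3}$ if $r=2n$, $\sqrt{3/2}\,p_r(y_k^n)$ if $2n<r<3n$. Orthonormal VP wavelets: $\tilde\psi_{n,k}^m=\sum_{r=n}^{3n-1}\sigma_{r,k}^n\tilde q_{n,r}^m/\sqrt{v_{n,r}^m}$, $k=1,\ldots,2n$, an orthonormal basis of $\mathcal{W}_n^m$. *)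

(* Defs.v *)
From HB Require Import structures.
From mathcomp Require Import all_boot all_order all_algebra.
From mathcomp Require Import all_classical all_reals all_analysis.
Set Implicit Arguments. Unset Strict Implicit. Unset Printing Implicit Defensive.
Import Order.TTheory GRing.Theory Num.Theory.
Local Open Scope ring_scope.

Section VP.
Variable R : realType.

Definition cheb (r : nat) (x : R) : R :=
  if r == 0%N then Num.sqrt (1 / pi) else Num.sqrt (2 / pi) * cos (r%:R * acos x).

Definition node (N k : nat) : R := cos (((2 * k - 1)%N%:R * pi) / (2 * N)%N%:R).

Definition inY (n : nat) (x : R) : Prop :=
  (exists k, (1 <= k <= 3 * n)%N /\ x = node (3 * n) k) /\
  (forall j, (1 <= j <= n)%N -> x <> node n j).

(* y : {1..2n} -> R is an enumeration y_k^n (k = 1..2n) of Y_n *)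
Definition Yenum (n : nat) (y : nat -> R) : Prop :=
  (forall k, (1 <= k <= 2 * n)%N -> inY n (y k)) /\
  (forall k l, (1 <= k <= 2 * n)%N -> (1 <= l <= 2 * n)%N -> y k = y l -> k = l).

Definition mu (N m r : nat) : R :=
  if (r <= N - m)%N then 1
  else if (r < N + m)%N then (m%:R + N%:R - r%:R) / (2 * m%:R) else 0.

Definition q (N m r : nat) (x : R) : R :=
  if (r <= N - m)%N then cheb r x
  else mu N m r * cheb r x - mu N m (2 * N - r) * cheb (2 * N - r) x.

Definition nu (N m r : nat) : R :=
  if (r <= N - m)%N then 1
  else (m%:R ^+ 2 + (N%:R - r%:R) ^+ 2) / (2 * m%:R ^+ 2).

(* tau_{r,k}^N (depends on m through nu) *)
Definition tau (N m r k : nat) : R :=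
  Num.sqrt (pi / (N%:R * nu N m r)) * cheb r (node N k).

Definition phi (N m k : nat) (x : R) : R :=
  \sum_(0 <= r < N) tau N m r k * q N m r x.

Definition qt (n m r : nat) (x : R) : R :=
  if (r < n + m)%N then mu n m r * cheb (2 * n - r) x + mu n m (2 * n - r) * cheb r x
  else if (r <= 3 * n - m)%N then cheb r x
  else q (3 * n) m r x.

Definition v (n m r : nat) : R :=
  if (n < r < n + m)%N then (m%:R ^+ 2 + (n%:R - r%:R) ^+ 2) / (2 * m%:R ^+ 2)
  else if (r == n) || (n + m <= r <= 3 * n - m)%N then 1
  else (m%:R ^+ 2 + ((3 * n)%N%:R - r%:R) ^+ 2) / (2 * m%:R ^+ 2).

Definition cc (n : nat) (y : nat -> R) (r k : nat) : R :=
  if r == n then cheb n (y k)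
  else if (r < 2 * n)%N then (cheb r (y k) + cheb (2 * n - r) (y k)) / Num.sqrt 2
  else if r == (2 * n)%N then
    (cheb (2 * n) (y k) + Num.sqrt 2 * cheb 0 (y k)) / Num.sqrt 3
  else Num.sqrt (3 / 2) * cheb r (y k).

Definition sigma (n : nat) (y : nat -> R) (r k : nat) : R :=
  Num.sqrt (pi / (3 * n)%N%:R) * cc n y r k.

Definition psi (n m : nat) (y : nat -> R) (k : nat) (x : R) : R :=
  \sum_(n <= r < 3 * n) sigma n y r k * qt n m r x / Num.sqrt (v n m r).

Definition Aent (n m k j : nat) : R :=
  \sum_(0 <= s < n - m + 1) tau n m s k * tau (3 * n) m s j
  + \sum_(n - m + 1 <= s < n)
      tau n m s k * (mu n m s * tau (3 * n) m s j
                     - mu n m (2 * n - s) * tau (3 * n) m (2 * n - s) j).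

Definition Bent (n m : nat) (y : nat -> R) (h j : nat) : R :=
  \sum_(n <= r < n + m) sigma n y r h / Num.sqrt (v n m r) *
      (mu n m r * tau (3 * n) m (2 * n - r) j + mu n m (2 * n - r) * tau (3 * n) m r j)
  + \sum_(n + m <= r < 3 * n - m + 1) sigma n y r h / Num.sqrt (v n m r) * tau (3 * n) m r j
  + \sum_(3 * n - m + 1 <= r < 3 * n) sigma n y r h * Num.sqrt (v n m r) * tau (3 * n) m r j.

(* matrices with 0-based ordinal indices: row i <-> k = i+1 *)
Definition Amat (n m : nat) : 'M[R]_(n, 3 * n) :=
  \matrix_(k < n, j < 3 * n) Aent n m k.+1 j.+1.
Definition Bmat (n m : nat) (y : nat -> R) : 'M[R]_(2 * n, 3 * n) :=
  \matrix_(h < 2 * n, j < 3 * n) Bent n m y h.+1 j.+1.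

End VP.

Arguments cheb {R}. Arguments node {R}. Arguments inY {R}. Arguments Yenum {R}.
Arguments mu {R}. Arguments q {R}. Arguments nu {R}. Arguments tau {R}.
Arguments phi {R}. Arguments qt {R}. Arguments v {R}. Arguments cc {R}.
Arguments sigma {R}. Arguments psi {R}. Arguments Aent {R}. Arguments Bent {R}.
Arguments Amat {R}. Arguments Bmat {R}.

(* Main.v *)
Require Import Defs.
From HB Require Import structures.
From mathcomp Require Import all_boot all_order all_algebra.
From mathcomp Require Import all_classical all_reals all_analysis.
From mathcomp Require Import zify ring lra.
Import Order.TTheory GRing.Theory Num.Theory.
Local Open Scope ring_scope.


Lemma sin_natpi (R : realType) (j : nat) : sin (j%:R * pi) = 0 :> R.
Proof.
elim: j => [|j IH]; first by rewrite mul0r sin0.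
by rewrite -natr1 mulrDl mul1r sinDpi IH oppr0.
Qed.

Lemma cos_natpi (R : realType) (j : nat) : cos (j%:R * pi) = (-1) ^+ j :> R.
Proof.
elim: j => [|j IH]; first by rewrite mul0r cos0 expr0.
by rewrite -natr1 mulrDl mul1r cosDpi IH exprS mulN1r.
Qed.

Definition th (R : realType) (M k : nat) : R := ((2 * k + 1)%N%:R * pi) / (2 * M)%N%:R.

Lemma sum_cos0 (R : realType) (M j : nat) : (0 < j < 2 * M)%N ->
  \sum_(k < M) cos (j%:R * th R M k) = 0.
Proof.
move=> /andP[j0 jM].
have M0 : (0 < M)%N by lia.
have M2 : (2 * M)%N%:R != 0 :> R by rewrite pnatr_eq0; lia.
set a : R := j%:R * pi / (2 * M)%N%:R.
have ha : 0 < a < pi.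
  apply/andP; split.
    by rewrite /a divr_gt0 // ?mulr_gt0 ?pi_gt0 ?ltr0n //; lia.
  rewrite /a ltr_pdivrMr ?ltr0n; last lia.
  by rewrite mulrC ltr_pM2l ?pi_gt0 // ltr_nat.
have sa : sin a != 0 by rewrite gt_eqF // sin_gt0_pi.
have e k : j%:R * th R M k = (2 * k + 1)%N%:R * a.
  rewrite /th /a; ring.
have key k : (sin a *+ 2) * cos ((2 * k + 1)%N%:R * a) =
    sin ((k.+1 * 2)%N%:R * a) - sin ((k * 2)%N%:R * a).
  have h1 : (k.+1 * 2)%N%:R * a = (2 * k + 1)%N%:R * a + a.
    by rewrite !natrD !natrM /=; rewrite -!natr1 /=; ring.
  have h2 : (k * 2)%N%:R * a = (2 * k + 1)%N%:R * a - a.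
    by rewrite !natrD !natrM /=; ring.
  by rewrite h1 h2 sinD sinB; ring.
have : (sin a *+ 2) * \sum_(k < M) cos (j%:R * th R M k) = 0.
  rewrite mulr_sumr (eq_bigr (fun k : 'I_M => sin ((k.+1 * 2)%N%:R * a) - sin ((k * 2)%N%:R * a))); last by move=> k _; rewrite e key.
  rewrite -(big_mkord xpredT (fun k => sin ((k.+1 * 2)%N%:R * a) - sin ((k * 2)%N%:R * a))).
  rewrite (telescope_sumr (fun k => sin ((k * 2)%N%:R * a))) //.
  rewrite mul0r sin0 subr0.
  have -> : (M * 2)%N%:R * a = j%:R * pi.
    have M0' : M%:R != 0 :> R by rewrite pnatr_eq0 -lt0n.
    by rewrite /a !natrM; field.
  exact: sin_natpi.
move/eqP; rewrite mulf_eq0 => /orP[|/eqP //].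
by rewrite mulrn_eq0 (negbTE sa).
Qed.

Lemma th_in (R : realType) (M k : nat) : (k < M)%N -> 0 <= th R M k <= pi.
Proof.
move=> kM; have M0 : (0 < (2 * M)%N%:R :> R) by rewrite ltr0n; lia.
apply/andP; split.
  by rewrite /th divr_ge0 // mulr_ge0 // pi_ge0.
rewrite /th ler_pdivrMr // mulrC ler_pM2l ?pi_gt0 // ler_nat; lia.
Qed.

Lemma nodeE (R : realType) (M k : nat) : node M k.+1 = cos (th R M k).
Proof. by rewrite /node /th; have -> : (2 * k.+1 - 1 = 2 * k + 1)%N by lia. Qed.

Lemma cheb_node (R : realType) (M k r : nat) : (k < M)%N ->
  cheb r (node M k.+1) = if r == 0%N then Num.sqrt (1 / pi)
                         else Num.sqrt (2 / pi) * cos (r%:R * th R M k) :> R.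
Proof.
move=> kM; rewrite nodeE /cheb cosK //.
by rewrite in_itv /=; apply: th_in.
Qed.

Lemma coscos (R : realType) (x y : R) : cos x * cos y = (cos (x + y) + cos (x - y)) / 2.
Proof. by rewrite cosD cosB; field. Qed.

Lemma sum_cosB (R : realType) (M a b : nat) : (a < M)%N -> (b < M)%N -> a != b ->
  \sum_(k < M) cos ((a%:R - b%:R) * th R M k) = 0 :> R.
Proof.
move=> aM bM ab.
case: (ltnP a b) => hab.
  rewrite -[RHS](sum_cos0 R M (b - a)%N); last lia.
  by apply: eq_bigr => k _; rewrite natrB ?(ltnW hab) // -cosN; congr cos; ring.
rewrite -[RHS](sum_cos0 R M (a - b)%N); last lia.
by apply: eq_bigr => k _; rewrite natrB.
Qed.

Lemma sum_cosD (R : realType) (M a b : nat) : (a < M)%N -> (b < M)%N -> a != b ->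
  \sum_(k < M) cos (a%:R * th R M k) * cos (b%:R * th R M k) = 0.
Proof.
move=> aM bM ab.
rewrite (eq_bigr (fun k : 'I_M => (cos ((a + b)%N%:R * th R M k) +
    cos ((a%:R - b%:R) * th R M k)) / 2)); last first.
  by move=> k _; rewrite coscos natrD; congr ((cos _ + cos _) / 2); ring.
rewrite -mulr_suml big_split /= sum_cosB // sum_cos0 ?addr0 ?mul0r //; lia.
Qed.

Lemma sum_cos2 (R : realType) (M a : nat) : (0 < a < M)%N ->
  \sum_(k < M) cos (a%:R * th R M k) * cos (a%:R * th R M k) = M%:R / 2.
Proof.
move=> aM.
rewrite (eq_bigr (fun k : 'I_M => (cos ((a + a)%N%:R * th R M k) + 1) / 2)); last first.
  by move=> k _; rewrite coscos subrr cos0 natrD; congr ((cos _ + 1) / 2); ring.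
rewrite -mulr_suml big_split /= sum_cos0 ?add0r; last lia.
by rewrite sumr_const card_ord.
Qed.

Lemma DO (R : realType) (M a b : nat) : (a < M)%N -> (b < M)%N ->
  \sum_(k < M) cheb a (node M k.+1) * cheb b (node M k.+1) = (a == b)%:R * (M%:R / pi) :> R.
Proof.
move=> aM bM.
have p0 : 0 < pi :> R by exact: pi_gt0.
rewrite (eq_bigr (fun k : 'I_M => (if a == 0%N then Num.sqrt (1 / pi)
                         else Num.sqrt (2 / pi) * cos (a%:R * th R M k)) *
      (if b == 0%N then Num.sqrt (1 / pi)
                         else Num.sqrt (2 / pi) * cos (b%:R * th R M k)))); last first.
  by move=> k _; rewrite !cheb_node.
have s1 : Num.sqrt (1 / pi) * Num.sqrt (1 / pi) = 1 / pi :> R.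
  by rewrite -expr2 sqr_sqrtr // divr_ge0 // ltW.
have s2 : Num.sqrt (2 / pi) * Num.sqrt (2 / pi) = 2 / pi :> R.
  by rewrite -expr2 sqr_sqrtr // divr_ge0 // ltW.
case: a aM => [|a] aM; case: b bM => [|b] bM /=.
- by rewrite sumr_const card_ord s1 -[in LHS]mulr_natr !mul1r mulrC.
- rewrite (eq_bigr (fun k : 'I_M => (Num.sqrt (1 / pi) * Num.sqrt (2/pi)) * cos (b.+1%:R * th R M k))).
    by rewrite -mulr_sumr sum_cos0 ?mulr0 ?mul0r //; lia.
  by move=> k _; ring.
- rewrite (eq_bigr (fun k : 'I_M => (Num.sqrt (2 / pi) * Num.sqrt (1/pi)) * cos (a.+1%:R * th R M k))).
    by rewrite -mulr_sumr sum_cos0 ?mulr0 ?mul0r //; lia.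
  by move=> k _; ring.
- rewrite (eq_bigr (fun k : 'I_M => (Num.sqrt (2 / pi) * Num.sqrt (2/pi)) *
     (cos (a.+1%:R * th R M k) * cos (b.+1%:R * th R M k)))); last by move=> k _; ring.
  rewrite -mulr_sumr; case: (eqVneq a.+1 b.+1) => [<-|ab].
    rewrite sum_cos2 ?s2 /=; last lia.
    by rewrite mul1r; move: p0; generalize (@pi R) => p p0; field; rewrite gt_eqF.
  by rewrite sum_cosD // mulr0 mul0r.
Qed.

Lemma DO_dual (R : realType) (N k l : nat) : (k < N)%N -> (l < N)%N ->
  \sum_(r < N) cheb r (node N k.+1) * cheb r (node N l.+1) = (k == l)%:R * (N%:R / pi) :> R.
Proof.
move=> kN lN.
have p0 : 0 < pi :> R by exact: pi_gt0.
have N0 : 0 < N%:R :> R by rewrite ltr0n; lia.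
set c := Num.sqrt (pi / N%:R) : R.
have c2 : c * c = pi / N%:R by rewrite -expr2 sqr_sqrtr // divr_ge0 // ltW.
pose U : 'M[R]_N := \matrix_(r < N, j < N) (c * cheb r (node N j.+1)).
have UU : U *m U^T = 1%:M.
  apply/matrixP => i j; rewrite !mxE.
  rewrite (eq_bigr (fun t : 'I_N => (c * c) * (cheb i (node N t.+1) * cheb j (node N t.+1)))); last first.
    by move=> t _; rewrite !mxE; ring.
  rewrite -mulr_sumr DO // c2.
  move: p0 N0; generalize (@pi R) => p p0 N0.
  by field; rewrite !gt_eqF.
have /matrixP/(_ (Ordinal kN) (Ordinal lN)) := mulmx1C UU.
rewrite !mxE /=.
rewrite (eq_bigr (fun t : 'I_N => (c * c) * (cheb t (node N k.+1) * cheb t (node N l.+1)))); last first.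
  by move=> t _; rewrite !mxE; ring.
rewrite -mulr_sumr c2 => H.
have -> : (k == l) = (Ordinal kN == Ordinal lN) by [].
rewrite -H; move: p0 N0; generalize (@pi R) => p p0 N0.
by field; rewrite !gt_eqF.
Qed.


Definition ip (R : realType) (M : nat) (f g : R -> R) : R :=
  pi / M%:R * \sum_(k < M) f (node M k.+1) * g (node M k.+1).

Definition ev (R : realType) (L : seq (nat * R)) (x : R) : R :=
  \sum_(p <- L) p.2 * cheb p.1 x.

Definition Gram (R : realType) (L L' : seq (nat * R)) : R :=
  \sum_(p <- L) \sum_(p' <- L') p.2 * p'.2 * (p.1 == p'.1)%:R.

Arguments ip {R}. Arguments ev {R}. Arguments Gram {R}.

Lemma ipC (R : realType) (M : nat) (f g : R -> R) : ip M f g = ip M g f.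
Proof. by rewrite /ip; congr (_ * _); apply: eq_bigr => k _; rewrite mulrC. Qed.

Lemma ip_suml (R : realType) (M : nat) (I : eqType) (s : seq I) (P : pred I)
   (F : I -> R -> R) (h : R -> R) :
  ip M (fun x => \sum_(i <- s | P i) F i x) h = \sum_(i <- s | P i) ip M (F i) h.
Proof.
rewrite /ip (eq_bigr (fun k : 'I_M => \sum_(i <- s | P i) F i (node M k.+1) * h (node M k.+1))); last first.
  by move=> k _; rewrite mulr_suml.
by rewrite exchange_big mulr_sumr.
Qed.

Lemma ipZl (R : realType) (M : nat) (c : R) (f h : R -> R) :
  ip M (fun x => c * f x) h = c * ip M f h.
Proof.
rewrite /ip (eq_bigr (fun k : 'I_M => c * (f (node M k.+1) * h (node M k.+1)))); last first.
  by move=> k _; rewrite mulrA.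
by rewrite -mulr_sumr mulrCA.
Qed.

Lemma ip_sumZl (R : realType) (M : nat) (I : eqType) (s : seq I) (P : pred I)
   (c : I -> R) (F : I -> R -> R) (h : R -> R) :
  ip M (fun x => \sum_(i <- s | P i) c i * F i x) h = \sum_(i <- s | P i) c i * ip M (F i) h.
Proof. rewrite ip_suml; apply: eq_bigr => i _; exact: ipZl. Qed.

Lemma ip_sumZr (R : realType) (M : nat) (I : eqType) (s : seq I) (P : pred I)
   (c : I -> R) (F : I -> R -> R) (h : R -> R) :
  ip M h (fun x => \sum_(i <- s | P i) c i * F i x) = \sum_(i <- s | P i) c i * ip M h (F i).
Proof. rewrite ipC ip_sumZl; apply: eq_bigr => i _; by rewrite ipC. Qed.

Lemma ip_cheb (R : realType) (M : nat) a b : (a < M)%N -> (b < M)%N ->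
  ip M (@cheb R a) (cheb b) = (a == b)%:R.
Proof.
move=> aM bM; rewrite /ip DO //.
have p0 : 0 < pi :> R by exact: pi_gt0.
have N0 : 0 < M%:R :> R by rewrite ltr0n; lia.
move: p0; generalize (@pi R) => p p0.
by field; rewrite !gt_eqF.
Qed.

Lemma ip_ev (R : realType) (M : nat) (L L' : seq (nat * R)) :
  all (fun p => p.1 < M)%N L -> all (fun p => p.1 < M)%N L' ->
  ip M (ev L) (ev L') = Gram L L'.
Proof.
move=> /allP HL /allP HL'.
rewrite /ev ip_sumZl /Gram big_seq [RHS]big_seq; apply: eq_bigr => p pL.
rewrite ip_sumZr mulr_sumr big_seq [RHS]big_seq; apply: eq_bigr => p' pL'.
have h1 := HL _ pL; have h2 := HL' _ pL'.
by rewrite ip_cheb // mulrA.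
Qed.

Lemma natr_true (R : pzRingType) : (true%:R : R) = 1. Proof. by []. Qed.
Lemma natr_false (R : pzRingType) : (false%:R : R) = 0. Proof. by []. Qed.

Ltac deq0 := repeat match goal with
 | |- context [@eq_op _ ?a ?b] =>
   first [ rewrite (_ : (a == b) = true); last by apply/eqP; lia
         | rewrite (_ : (a == b) = false); last by apply/eqP; lia ]
 end.
Ltac deq := deq0; rewrite ?natr_true ?natr_false.

Definition qL (R : realType) (N m r : nat) : seq (nat * R) :=
  if (r <= N - m)%N then [:: (r, 1)]
  else [:: (r, mu N m r); ((2 * N - r)%N, - mu N m (2 * N - r))].

Definition qtL (R : realType) (n m r : nat) : seq (nat * R) :=
  if (r < n + m)%N then [:: ((2 * n - r)%N, mu n m r); (r, mu n m (2 * n - r))]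
  else if (r <= 3 * n - m)%N then [:: (r, 1)] else qL R (3 * n) m r.

Arguments qL {R}. Arguments qtL {R}.

Lemma q_ev (R : realType) N m r : @q R N m r = ev (qL N m r).
Proof.
apply: boolp.funext => x; rewrite /q /qL /ev; case: ifP => _;
  rewrite !big_cons big_nil /=; ring.
Qed.

Lemma qt_ev (R : realType) n m r : @qt R n m r = ev (qtL n m r).
Proof.
apply: boolp.funext => x; rewrite /qt /qtL; case: ifP => _.
  rewrite /ev !big_cons big_nil /=; ring.
case: ifP => _; last by rewrite q_ev.
rewrite /ev !big_cons big_nil /=; ring.
Qed.

Lemma qL_bnd (R : realType) N m r M : (r < N)%N -> (N + m <= M)%N ->
  all (fun p => p.1 < M)%N (@qL R N m r).
Proof. move=> rN NM; rewrite /qL; case: ifP => /= h; rewrite ?andbT; lia. Qed.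

Lemma qtL_bnd (R : realType) n m r : (m < n)%N -> (n <= r < 3 * n)%N ->
  all (fun p => p.1 < 4 * n)%N (@qtL R n m r).
Proof.
move=> mn rn; rewrite /qtL; case: ifP => /= h1; first (rewrite ?andbT; lia).
case: ifP => /= h2; first (rewrite ?andbT; lia).
apply: qL_bnd; lia.
Qed.

Lemma mu_nu (R : realType) N m r : (0 < m)%N -> (N - m < r < N)%N ->
  mu N m r ^+ 2 + mu N m (2 * N - r) ^+ 2 = nu N m r :> R.
Proof.
move=> m0 hr.
have m0' : m%:R != 0 :> R by rewrite pnatr_eq0 -lt0n.
rewrite /mu /nu.
have -> : (r <= N - m)%N = false by lia.
have -> : (r < N + m)%N = true by lia.
have -> : (2 * N - r <= N - m)%N = false by lia.
have -> : (2 * N - r < N + m)%N = true by lia.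
rewrite natrB; last lia.
rewrite natrM; field.
by rewrite m0'.
Qed.

Ltac gexp := rewrite /Gram !big_cons !big_nil /=.

Lemma G_qq (R : realType) N m r s : (0 < m < N)%N -> (r < N)%N -> (s < N)%N ->
  Gram (@qL R N m r) (qL N m s) = (r == s)%:R * nu N m r.
Proof.
move=> /andP[m0 mN] rN sN.
case: (eqVneq r s) => [<-|/eqP rs].
  rewrite /qL; case: ifP => h; gexp; deq.
    by rewrite /nu h; ring.
  rewrite -(@mu_nu R N m r m0); last lia.
  ring.
rewrite /qL; case: ifP => h1; case: ifP => h2; gexp; deq; ring.
Qed.

Ltac ifs := repeat (case: ifP => ?; try (exfalso; lia)).

Lemma G_qqt (R : realType) n m s r : (0 < m < n)%N -> (s < n)%N -> (n <= r < 3 * n)%N ->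
  Gram (@qL R n m s) (qtL n m r) = 0.
Proof.
move=> /andP[m0 mn] sn rn.
case: (eqVneq r (2 * n - s)%N) => [E|/eqP E].
  rewrite /qtL /qL; ifs; gexp; deq; try ring.
  rewrite (_ : (2 * n - r)%N = s); last lia.
  rewrite E; ring.
rewrite /qtL /qL; ifs; gexp; deq; ring.
Qed.

Lemma mu_v (R : realType) n m r : (0 < m < n)%N -> (n < r < n + m)%N ->
  mu n m r ^+ 2 + mu n m (2 * n - r) ^+ 2 = v n m r :> R.
Proof.
move=> /andP[m0 mn] hr.
have m0' : m%:R != 0 :> R by rewrite pnatr_eq0 -lt0n.
rewrite /mu /v.
have -> : (n < r < n + m)%N = true by lia.
have -> : (r <= n - m)%N = false by lia.
have -> : (r < n + m)%N = true by lia.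
have -> : (2 * n - r <= n - m)%N = false by lia.
have -> : (2 * n - r < n + m)%N = true by lia.
rewrite natrB; last lia.
rewrite natrM; field.
by rewrite m0'.
Qed.

Lemma mu_v3 (R : realType) n m r : (0 < m < n)%N -> (3 * n - m < r < 3 * n)%N ->
  mu (3 * n) m r ^+ 2 + mu (3 * n) m (2 * (3 * n) - r) ^+ 2 = v n m r :> R.
Proof.
move=> /andP[m0 mn] hr.
rewrite (@mu_nu R (3 * n) m r m0); last lia.
rewrite /nu /v.
have -> : (n < r < n + m)%N = false by lia.
have -> : (r == n) = false by apply/eqP; lia.
have -> : (n + m <= r <= 3 * n - m)%N = false by lia.
have -> : (r <= 3 * n - m)%N = false by lia.
by [].
Qed.

Lemma mu_half (R : realType) n m : (0 < m < n)%N -> mu n m n = 1 / 2 :> R.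
Proof.
move=> /andP[m0 mn]; have m0' : m%:R != 0 :> R by rewrite pnatr_eq0 -lt0n.
rewrite /mu.
have -> : (n <= n - m)%N = false by lia.
have -> : (n < n + m)%N = true by lia.
by field.
Qed.

Lemma G_qtqt (R : realType) n m r s : (0 < m < n)%N -> (n <= r < 3 * n)%N -> (n <= s < 3 * n)%N ->
  Gram (@qtL R n m r) (qtL n m s) = (r == s)%:R * v n m r.
Proof.
move=> hm rn sn; have /andP[m0 mn] := hm.
case: (eqVneq r s) => [<-|/eqP rs]; last first.
  rewrite /qtL /qL; ifs; gexp; deq; ring.
case: (eqVneq r n) => [->|/eqP rn'].
  rewrite /qtL.
  have -> : (n < n + m)%N = true by lia.
  gexp; deq.
  rewrite (_ : (2 * n - n)%N = n); last lia.
  by rewrite (@mu_half R n m hm) /v; ifs; field.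
rewrite /qtL /qL; ifs; gexp; deq.
- by rewrite -(@mu_v R n m r hm); [ring|lia].
- by rewrite /v; ifs; ring.
- by rewrite -(@mu_v3 R n m r hm); [ring|lia].
Qed.

Lemma sum_delta (R : realType) lo hi a (F : nat -> R) : (lo <= a < hi)%N ->
  \sum_(lo <= i < hi) F i * (a == i)%:R = F a.
Proof.
move=> ha.
rewrite (bigD1_seq a) ?mem_index_iota //=; last by rewrite /index_iota iota_uniq.
rewrite eqxx mulr1 big1 ?addr0 // => i /negbTE.
by rewrite eq_sym => ->; rewrite mulr0.
Qed.

Lemma GramC (R : realType) (L L' : seq (nat * R)) : Gram L L' = Gram L' L.
Proof.
rewrite /Gram exchange_big; apply: eq_bigr => p _; apply: eq_bigr => p' _.
by rewrite eq_sym; ring.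
Qed.

Lemma Gram_cons2 (R : realType) a (w : R) b w' L :
  Gram [:: (a, w); (b, w')] L = Gram [:: (a, w)] L + Gram [:: (b, w')] L.
Proof. by rewrite /Gram !big_cons !big_nil !addr0. Qed.

Lemma G_single (R : realType) N m a t (w : R) : (a <= N - m)%N -> (t < N)%N ->
  Gram [:: (a, w)] (qL N m t) = w * (a == t)%:R.
Proof.
move=> aN tN; case: (eqVneq a t) => [<-|/eqP at_].
  by rewrite /qL; ifs; gexp; deq; ring.
by rewrite /qL; ifs; gexp; deq; ring.
Qed.

Lemma sum_single (R : realType) N m j a (w : R) : (a <= N - m)%N -> (a < N)%N ->
  \sum_(0 <= t < N) tau N m t j * Gram [:: (a, w)] (qL N m t) = w * tau N m a j.
Proof.
move=> aN aN'.
rewrite (eq_big_nat _ _ (F2 := fun t => (w * tau N m t j) * (a == t)%:R)); last first.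
  by move=> t /andP[_ tN]; rewrite G_single //; ring.
by rewrite sum_delta //; lia.
Qed.

Lemma qL_lo (R : realType) N m s : (s <= N - m)%N -> @qL R N m s = [:: (s, 1)].
Proof. by move=> h; rewrite /qL h. Qed.

Lemma qL_hi (R : realType) N m s : (N - m < s)%N ->
  @qL R N m s = [:: (s, mu N m s); ((2 * N - s)%N, - mu N m (2 * N - s))].
Proof. by move=> h; rewrite /qL; ifs. Qed.

Lemma ip_phil (R : realType) M N m k (G : R -> R) :
  ip M (phi N m k) G = \sum_(0 <= r < N) tau N m r k * ip M (q N m r) G.
Proof. by rewrite /phi ip_sumZl. Qed.

Lemma ip_phir (R : realType) M N m k (G : R -> R) :
  ip M G (phi N m k) = \sum_(0 <= r < N) tau N m r k * ip M G (q N m r).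
Proof. by rewrite /phi ip_sumZr. Qed.

Lemma ip_ev_phi (R : realType) M N m j (L : seq (nat * R)) : (N + m <= M)%N ->
  all (fun p => p.1 < M)%N L ->
  ip M (ev L) (phi N m j) = \sum_(0 <= t < N) tau N m t j * Gram L (qL N m t).
Proof.
move=> NM HL; rewrite ip_phir; apply: eq_big_nat => t /andP[_ tN].
by rewrite q_ev ip_ev // qL_bnd.
Qed.

Lemma ipA (R : realType) n m k j : (0 < m < n)%N ->
  ip (4 * n) (phi n m k) (phi (3 * n) m j) = @Aent R n m k j.
Proof.
move=> hm; have /andP[m0 mn] := hm.
rewrite ip_phil /Aent (big_cat_nat _ (n := (n - m + 1)%N)) /=; [|lia|lia].
congr (_ + _); apply: eq_big_nat => s /andP[s1 s2].
  rewrite q_ev ip_ev_phi; [|lia|apply: qL_bnd; lia].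
  rewrite qL_lo; last lia.
  rewrite sum_single; [by rewrite mul1r|lia|lia].
rewrite q_ev ip_ev_phi; [|lia|apply: qL_bnd; lia].
rewrite qL_hi; last lia.
rewrite (eq_big_nat _ _ (F2 := fun t => tau (3 * n) m t j * Gram [:: (s, mu n m s)] (qL (3 * n) m t)
   + tau (3 * n) m t j * Gram [:: ((2 * n - s)%N, - mu n m (2 * n - s))] (qL (3 * n) m t))); last first.
  by move=> t _; rewrite Gram_cons2 mulrDr.
rewrite big_split /= !sum_single; [|lia|lia|lia|lia].
ring.
Qed.

Lemma frac_gt0 (R : realType) (m : nat) (d : R) : (0 < m)%N ->
  0 < (m%:R ^+ 2 + d ^+ 2) / (2 * m%:R ^+ 2) :> R.
Proof.
move=> m0; have a0 : 0 < m%:R ^+ 2 :> R by rewrite exprn_gt0 // ltr0n.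
have b0 : 0 <= d ^+ 2 := sqr_ge0 d.
by apply: divr_gt0; lra.
Qed.

Lemma nu_gt0 (R : realType) N m r : (0 < m)%N -> 0 < @nu R N m r.
Proof. by move=> m0; rewrite /nu; case: ifP => _; [exact: ltr01|exact: frac_gt0]. Qed.

Lemma v_gt0 (R : realType) n m r : (0 < m)%N -> 0 < @v R n m r.
Proof.
by move=> m0; rewrite /v; case: ifP => _; [|case: ifP => _]; rewrite ?ltr01 ?frac_gt0.
Qed.

Lemma v_nu3 (R : realType) n m r : (0 < m < n)%N -> (3 * n - m < r < 3 * n)%N ->
  v n m r = nu (3 * n) m r :> R.
Proof.
move=> hm hr; have /andP[m0 mn] := hm.
by rewrite -(@mu_v3 R n m r hm hr) -(@mu_nu R (3 * n) m r m0) //; lia.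
Qed.

Lemma div_sqrt (R : realType) (x : R) : 0 < x -> x / Num.sqrt x = Num.sqrt x.
Proof.
move=> x0; have s0 : 0 < Num.sqrt x by rewrite sqrtr_gt0.
rewrite -{1}(sqr_sqrtr (ltW x0)) expr2 -mulrA divff ?mulr1 //.
by rewrite gt_eqF.
Qed.

Lemma psiE (R : realType) n m y h :
  psi n m y h = fun x : R => \sum_(n <= r < 3 * n) (sigma n y r h / Num.sqrt (v n m r)) * qt n m r x.
Proof.
apply: boolp.funext => x; rewrite /psi; apply: eq_bigr => r _; ring.
Qed.

Lemma inner_B (R : realType) n m r j : (0 < m < n)%N -> (n <= r < 3 * n)%N ->
  \sum_(0 <= t < 3 * n) tau (3 * n) m t j * Gram (@qtL R n m r) (qL (3 * n) m t) =
  if (r < n + m)%N then mu n m r * tau (3 * n) m (2 * n - r) j + mu n m (2 * n - r) * tau (3 * n) m r j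
  else if (r <= 3 * n - m)%N then tau (3 * n) m r j else nu (3 * n) m r * tau (3 * n) m r j.
Proof.
move=> hm hr; have /andP[m0 mn] := hm.
rewrite /qtL; case: ifP => h1.
  rewrite (eq_big_nat _ _ (F2 := fun t => tau (3 * n) m t j * Gram [:: ((2 * n - r)%N, mu n m r)] (qL (3 * n) m t)
   + tau (3 * n) m t j * Gram [:: (r, mu n m (2 * n - r))] (qL (3 * n) m t))); last first.
    by move=> t _; rewrite Gram_cons2 mulrDr.
  by rewrite big_split /= !sum_single //; lia.
case: ifP => h2; first by rewrite sum_single ?mul1r //; lia.
rewrite (eq_big_nat _ _ (F2 := fun t => (nu (3 * n) m r * tau (3 * n) m t j) * (r == t)%:R)); last first.
  by move=> t /andP[_ ht]; rewrite G_qq //; [ring|lia|lia].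
by rewrite sum_delta //; lia.
Qed.

Lemma ipB (R : realType) n m y h j : (0 < m < n)%N ->
  ip (4 * n) (phi (3 * n) m j) (psi n m y h) = @Bent R n m y h j.
Proof.
move=> hm; have /andP[m0 mn] := hm.
rewrite psiE ip_sumZr.
rewrite (eq_big_nat _ _ (F2 := fun r => sigma n y r h / Num.sqrt (v n m r) *
  \sum_(0 <= t < 3 * n) tau (3 * n) m t j * Gram (qtL n m r) (qL (3 * n) m t))); last first.
  move=> r hr; rewrite ipC qt_ev ip_ev_phi //; first lia.
  by apply: qtL_bnd.
rewrite /Bent (big_cat_nat _ (n := (n + m)%N)) /=; [|lia|lia].
rewrite (big_cat_nat _ (n := (3 * n - m + 1)%N) (m := (n + m)%N)) /=; [|lia|lia].
rewrite addrA; congr (_ + _ + _); apply: eq_big_nat => r hr.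
- rewrite inner_B //; last lia.
  by have -> : (r < n + m)%N = true by lia.
- rewrite inner_B //; last lia.
  have -> : (r < n + m)%N = false by lia.
  by have -> : (r <= 3 * n - m)%N = true by lia.
- rewrite inner_B //; last lia.
  have -> : (r < n + m)%N = false by lia.
  have -> : (r <= 3 * n - m)%N = false by lia.
  rewrite -(@v_nu3 R n m r hm); last lia.
  have e := @div_sqrt R _ (@v_gt0 R n m r m0).
  by rewrite -[in RHS]e !mulrA; congr (_ * _ * _); rewrite mulrAC.
Qed.

Lemma ip_phiphi (R : realType) M N m k l : (0 < m < N)%N -> (N + m <= M)%N ->
  (k < N)%N -> (l < N)%N ->
  ip M (phi N m k.+1) (phi N m l.+1) = (k == l)%:R :> R.
Proof.
move=> hm NM kN lN; have /andP[m0 mN] := hm.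
rewrite ip_phil.
rewrite (eq_big_nat _ _ (F2 := fun r => pi / N%:R * (cheb r (node N k.+1) * cheb r (node N l.+1)))); last first.
  move=> r /andP[_ rN].
  rewrite q_ev ip_ev_phi //; last by apply: qL_bnd.
  rewrite (eq_big_nat _ _ (F2 := fun s => (tau N m s l.+1 * nu N m r) * (r == s)%:R)); last first.
    by move=> s /andP[_ sN]; rewrite G_qq //; ring.
  rewrite sum_delta; last lia.
  have nu0 := @nu_gt0 R N m r m0.
  have p0 : 0 < pi :> R by exact: pi_gt0.
  have N0 : 0 < N%:R :> R by rewrite ltr0n; lia.
  have e : Num.sqrt (pi / (N%:R * nu N m r)) * Num.sqrt (pi / (N%:R * nu N m r)) = pi / (N%:R * nu N m r) :> R.
    by rewrite -expr2 sqr_sqrtr // ltW // divr_gt0 // mulr_gt0.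
  rewrite /tau.
  transitivity ((Num.sqrt (pi / (N%:R * nu N m r)) * Num.sqrt (pi / (N%:R * nu N m r)) * nu N m r *
      (cheb r (node N k.+1) * cheb r (node N l.+1)) : R)); first ring.
  rewrite e; move: nu0 N0 p0; generalize (@nu R N m r) (@pi R) => a p a0 N0 p0.
  by field; rewrite !gt_eqF.
rewrite -mulr_sumr big_mkord DO_dual //.
have p0 : 0 < pi :> R by exact: pi_gt0.
have N0 : 0 < N%:R :> R by rewrite ltr0n; lia.
move: p0; generalize (@pi R) => p p0.
by field; rewrite !gt_eqF.
Qed.

Lemma ip_psiphi (R : realType) n m (y : nat -> R) h k : (0 < m < n)%N ->
  ip (4 * n) (psi n m y h) (phi n m k) = 0.
Proof.
move=> hm; have /andP[m0 mn] := hm.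
rewrite psiE ip_sumZl big1_seq // => r; rewrite mem_index_iota => hr.
rewrite qt_ev ip_ev_phi; [|lia|by apply: qtL_bnd].
rewrite big1_seq ?mulr0 // => s; rewrite mem_index_iota => hs.
by rewrite GramC G_qqt ?mulr0.
Qed.

Lemma ip_psipsi (R : realType) n m (y : nat -> R) h l : (0 < m < n)%N ->
  ip (4 * n) (psi n m y h) (psi n m y l) = \sum_(n <= r < 3 * n) sigma n y r h * sigma n y r l.
Proof.
move=> hm; have /andP[m0 mn] := hm.
rewrite psiE ip_sumZl; apply: eq_big_nat => r hr.
rewrite psiE ip_sumZr.
rewrite (eq_big_nat _ _ (F2 := fun s => (sigma n y s l / Num.sqrt (v n m s) * v n m r) * (r == s)%:R)); last first.
  move=> s hs; rewrite !qt_ev ip_ev ?qtL_bnd // G_qtqt //; ring.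
rewrite sum_delta //.
have e := @div_sqrt R _ (@v_gt0 R n m r m0).
transitivity (sigma n y r h * sigma n y r l * (v n m r / Num.sqrt (v n m r) / Num.sqrt (v n m r))); first ring.
rewrite e divff ?mulr1 //.
by rewrite gt_eqF // sqrtr_gt0 v_gt0.
Qed.


Lemma sum3 (R : realType) (H : nat -> R) n :
  \sum_(0 <= k < 3 * n) H k = \sum_(0 <= j < n) (H (3 * j)%N + H (3 * j + 1)%N + H (3 * j + 2)%N).
Proof.
elim: n => [|n IH]; first by rewrite muln0 !big_geq.
rewrite (_ : (3 * n.+1 = (3 * n).+2.+1)%N); last lia.
rewrite !big_nat_recr //=; try lia.
rewrite IH -!addrA; congr (_ + _).
rewrite (_ : (3 * n + 1 = (3 * n).+1)%N); last lia.
by rewrite (_ : (3 * n + 2 = (3 * n).+2)%N); last lia.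
Qed.

Lemma node3 (R : realType) n j : (0 < n)%N ->
  node (3 * n) (3 * j + 2)%N = node n j.+1 :> R.
Proof.
move=> n0; rewrite /node; congr cos.
rewrite (_ : (2 * (3 * j + 2) - 1 = 3 * (2 * j.+1 - 1))%N); last lia.
rewrite (_ : (2 * (3 * n) = 3 * (2 * n))%N); last lia.
have n0' : n%:R != 0 :> R by rewrite pnatr_eq0 -lt0n.
rewrite !natrM; field.
by rewrite n0'.
Qed.

Lemma Ysum (R : realType) n (y : nat -> R) (F : R -> R) : (0 < n)%N -> Yenum n y ->
  \sum_(h < 2 * n) F (y h.+1) =
  \sum_(k < 3 * n) F (node (3 * n) k.+1) - \sum_(j < n) F (node n j.+1).
Proof.
move=> n0 [Y1 Y2].
have ex : forall h : 'I_(2 * n), exists k : 'I_(3 * n), y h.+1 = node (3 * n) k.+1.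
  move=> h; have [[k [hk ->]] _] := Y1 h.+1 (ltac:(have := ltn_ord h; lia)).
  have kk : (k.-1 < 3 * n)%N by lia.
  exists (Ordinal kk) => /=; congr (node _ _); lia.
have [ka Hka] := boolp.choice ex.
have kainj : injective ka.
  move=> h1 h2 e; apply: ord_inj; apply/eqP; rewrite -eqSS; apply/eqP.
  apply: Y2; [have := ltn_ord h1; lia|have := ltn_ord h2; lia|].
  by rewrite !Hka e.
pose K := [set k : 'I_(3 * n) | (k %% 3 != 1)%N].
have kaK : forall h, ka h \in K.
  move=> h; rewrite inE; apply/negP => /eqP e.
  have [_ Y1'] := Y1 h.+1 (ltac:(have := ltn_ord h; lia)).
  apply: (Y1' ((ka h) %/ 3).+1); first by have := ltn_ord (ka h); lia.
  rewrite Hka (_ : (ka h).+1 = (3 * (ka h %/ 3) + 2)%N); last lia.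
  exact: node3.
pose G := fun k : nat => F (node (3 * n) k.+1).
have sum1 : \sum_(k < 3 * n | (k %% 3 == 1)%N) G k = \sum_(j < n) F (node n j.+1).
  rewrite big_mkcond /= -(big_mkord xpredT (fun k => if (k %% 3 == 1)%N then G k else 0)).
  rewrite sum3 -(big_mkord xpredT (fun j => F (node n j.+1))).
  apply: eq_big_nat => j _.
  have -> : ((3 * j) %% 3 == 1)%N = false by apply/eqP; lia.
  have -> : ((3 * j + 1) %% 3 == 1)%N = true by apply/eqP; lia.
  have -> : ((3 * j + 2) %% 3 == 1)%N = false by apply/eqP; lia.
  rewrite /G add0r addr0.
  have -> : (3 * j + 1).+1 = (3 * j + 2)%N by lia.
  by rewrite node3.
have cardK : #|K| = (2 * n)%N.
  apply/eqP; rewrite -(eqr_nat R) -sumr_const /K.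
  rewrite (eq_bigl (fun k : 'I_(3 * n) => (k %% 3 != 1)%N)); last by move=> k; rewrite inE.
  rewrite big_mkcond /= -(big_mkord xpredT (fun k => if (k %% 3 != 1)%N then 1 else 0)).
  rewrite sum3 (eq_big_nat _ _ (F2 := fun _ => 2%:R)); last first.
    move=> j _.
    have -> : ((3 * j) %% 3 != 1)%N = true by apply/eqP; lia.
    have -> : ((3 * j + 1) %% 3 != 1)%N = false by apply/negbTE; rewrite negbK; apply/eqP; lia.
    have -> : ((3 * j + 2) %% 3 != 1)%N = true by apply/eqP; lia.
    by rewrite addr0.
  by rewrite sumr_const_nat subn0; apply/eqP; rewrite -mulr_natr natrM; ring.
have imK : [set ka x | x in [set: 'I_(2 * n)]] = K.
  apply/eqP; rewrite eqEcard; apply/andP; split.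
    by apply/fintype.subsetP => k /imsetP [h _ ->]; apply: kaK.
  by rewrite card_imset // cardsT card_ord cardK.
rewrite (eq_bigr (fun h => G (ka h))); last by move=> h _; rewrite /G -Hka.
rewrite (eq_bigl (fun h => h \in [set: 'I_(2 * n)])); last by move=> h; rewrite inE.
rewrite -(@big_imset _ _ _ _ _ ka [set: 'I_(2 * n)] G) /=; last by move=> ? ? _ _; apply: kainj.
rewrite imK -sum1 (bigID (fun k : 'I_(3 * n) => (k %% 3 == 1)%N) xpredT G) /=.
rewrite addrC addrK; apply: eq_bigl => k; by rewrite inE.
Qed.

Definition ccf (R : realType) (n r : nat) (x : R) : R :=
  if r == n then cheb n x
  else if (r < 2 * n)%N then (cheb r x + cheb (2 * n - r) x) / Num.sqrt 2
  else if r == (2 * n)%N then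
    (cheb (2 * n) x + Num.sqrt 2 * cheb 0 x) / Num.sqrt 3
  else Num.sqrt (3 / 2) * cheb r x.

Definition ccL (R : realType) (n r : nat) : seq (nat * R) :=
  if r == n then [:: (n, 1)]
  else if (r < 2 * n)%N then [:: (r, 1 / Num.sqrt 2); ((2 * n - r)%N, 1 / Num.sqrt 2)]
  else if r == (2 * n)%N then [:: ((2 * n)%N, 1 / Num.sqrt 3); (0%N, Num.sqrt 2 / Num.sqrt 3)]
  else [:: (r, Num.sqrt (3 / 2))].

Arguments ccf {R}. Arguments ccL {R}.

Lemma ccf_ev (R : realType) n r : @ccf R n r = ev (ccL n r).
Proof.
apply: boolp.funext => x; rewrite /ccf /ccL /ev.
by case: ifP => _; [|case: ifP => _; [|case: ifP => _]]; rewrite !big_cons big_nil /=; ring.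
Qed.

Lemma ccL_bnd (R : realType) n r : (r < 3 * n)%N -> all (fun p => p.1 < 3 * n)%N (@ccL R n r).
Proof. move=> rn; rewrite /ccL; ifs => /=; rewrite ?andbT; lia. Qed.

Lemma sqrt_sq (R : realType) (x : R) : 0 <= x -> Num.sqrt x * Num.sqrt x = x.
Proof. by move=> x0; rewrite -expr2 sqr_sqrtr. Qed.

Lemma divsq (R : realType) (a u w : R) : a != 0 -> u / a * (w / a) = u * w / (a * a).
Proof. by move=> a0; field. Qed.

Lemma G_cc (R : realType) n r s : (0 < n)%N -> (n <= r < 3 * n)%N -> (n <= s < 3 * n)%N ->
  Gram (@ccL R n r) (ccL n s) = (r == s)%:R * (if (2 * n < r)%N then 3 / 2 else 1).
Proof.
move=> n0 rn sn.
have s2 : Num.sqrt 2 * Num.sqrt 2 = 2 :> R by rewrite sqrt_sq.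
have s3 : Num.sqrt 3 * Num.sqrt 3 = 3 :> R by rewrite sqrt_sq.
have s32 : Num.sqrt (3 / 2) * Num.sqrt (3 / 2) = 3 / 2 :> R by rewrite sqrt_sq.
have s2p : 0 < Num.sqrt 2 :> R by rewrite sqrtr_gt0.
have s3p : 0 < Num.sqrt 3 :> R by rewrite sqrtr_gt0.
case: (eqVneq r s) => [<-|/eqP rs]; last by rewrite /ccL; ifs; gexp; deq; ring.
rewrite /ccL; ifs; gexp; deq.
- by ring.
- by rewrite divsq ?gt_eqF // s2; field.
- by rewrite !divsq ?gt_eqF // s2 s3; field.
- by rewrite s32; ring.
Qed.

Lemma cos_nth (R : realType) n k : (0 < n)%N -> cos (n%:R * th R n k) = 0.
Proof.
move=> n0; have n0' : n%:R != 0 :> R by rewrite pnatr_eq0 -lt0n.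
rewrite (_ : n%:R * th R n k = k%:R * pi + pi / 2).
  by rewrite cosDpihalf sin_natpi oppr0.
rewrite /th (natrD _ (2 * k) 1) !natrM; field.
by rewrite n0'.
Qed.

Lemma cs_2nth (R : realType) n k : (0 < n)%N ->
  cos ((2 * n)%N%:R * th R n k) = -1 /\ sin ((2 * n)%N%:R * th R n k) = 0.
Proof.
move=> n0; have n0' : n%:R != 0 :> R by rewrite pnatr_eq0 -lt0n.
rewrite (_ : (2 * n)%N%:R * th R n k = (2 * k + 1)%N%:R * pi).
  rewrite cos_natpi sin_natpi; split => //.
  by rewrite exprD expr1 exprM sqrrN expr1n expr1n mul1r.
rewrite /th (natrD _ (2 * k) 1) !natrM; field.
by rewrite n0'.
Qed.

Lemma ccf_nnode (R : realType) n r k : (0 < n)%N -> (n <= r < 3 * n)%N -> (k < n)%N ->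
  @ccf R n r (node n k.+1) =
  if (2 * n < r)%N then - (Num.sqrt (3 / 2) * cheb (r - 2 * n) (node n k.+1)) else 0.
Proof.
move=> n0 rn kn.
have [c2 s2] := cs_2nth R n k n0.
have c1 := cos_nth R n k n0.
rewrite /ccf; ifs; rewrite !cheb_node //; deq0; ifs.
- by rewrite c1 mulr0.
- have key : cos (r%:R * th R n k) + cos ((2 * n - r)%N%:R * th R n k) = 0.
    rewrite (_ : r%:R * th R n k = n%:R * th R n k + (r - n)%N%:R * th R n k); last first.
      by rewrite -mulrDl -natrD; congr (_%:R * _); lia.
    rewrite (_ : (2 * n - r)%N%:R * th R n k = n%:R * th R n k - (r - n)%N%:R * th R n k); last first.
      by rewrite -mulrBl -natrB; [congr (_%:R * _)|]; lia.
    by rewrite cosD cosB c1; ring.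
  by rewrite -mulrDr key mulr0 mul0r.
- rewrite c2 (_ : 2 / pi = 2 * (1 / pi) :> R); last by rewrite mul1r.
  rewrite sqrtrM ?ler0n //; ring.
- rewrite (_ : r%:R * th R n k = (2 * n)%N%:R * th R n k + (r - 2 * n)%N%:R * th R n k); last first.
    by rewrite -mulrDl -natrD; congr (_%:R * _); lia.
  rewrite cosD c2 s2; ring.
Qed.

Lemma SS (R : realType) n (y : nat -> R) r s : (0 < n)%N -> Yenum n y ->
  (n <= r < 3 * n)%N -> (n <= s < 3 * n)%N ->
  \sum_(h < 2 * n) sigma n y r h.+1 * sigma n y s h.+1 = (r == s)%:R.
Proof.
move=> n0 Y rn sn.
have p0 : 0 < pi :> R by exact: pi_gt0.
have N0 : 0 < (3 * n)%N%:R :> R by rewrite ltr0n; lia.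
have n0' : 0 < n%:R :> R by rewrite ltr0n.
have c2 : Num.sqrt (pi / (3 * n)%N%:R) * Num.sqrt (pi / (3 * n)%N%:R) = pi / (3 * n)%N%:R :> R.
  by rewrite sqrt_sq // ltW // divr_gt0.
rewrite (eq_bigr (fun h : 'I_(2 * n) => pi / (3 * n)%N%:R * (ccf n r (y h.+1) * ccf n s (y h.+1)))); last first.
  by move=> h _; rewrite /sigma mulrACA c2.
rewrite -mulr_sumr (@Ysum R n y (fun x => ccf n r x * ccf n s x) n0 Y) mulrBr.
have -> : pi / (3 * n)%N%:R * \sum_(k < 3 * n) ccf n r (node (3 * n) k.+1) * ccf n s (node (3 * n) k.+1)
   = Gram (@ccL R n r) (ccL n s).
  have rn' : (r < 3 * n)%N by lia. have sn' : (s < 3 * n)%N by lia.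
  by rewrite -(@ip_ev R (3 * n) _ _ (@ccL_bnd R n r rn') (@ccL_bnd R n s sn')) !ccf_ev.
rewrite G_cc //.
rewrite (eq_bigr (fun k : 'I_n => if (2 * n < r)%N && (2 * n < s)%N then
   3 / 2 * (cheb (r - 2 * n) (node n k.+1) * cheb (s - 2 * n) (node n k.+1)) else 0)); last first.
  move=> k _; rewrite !ccf_nnode //.
  have s32 : Num.sqrt (3 / 2) * Num.sqrt (3 / 2) = 3 / 2 :> R by rewrite sqrt_sq.
  case: ifP => h1; case: ifP => h2 /=; rewrite ?mulr0 ?mul0r //.
  by rewrite mulrNN mulrACA s32.
case: ifP => h1; case: (boolP (2 * n < s)%N) => h2 /=; last first.
- by rewrite big1 ?mulr0 ?subr0 ?mulr1.
- by rewrite big1 ?mulr0 ?subr0 ?mulr1.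
- have -> : (r == s) = false by apply/eqP; lia.
  by rewrite big1 ?mulr0 ?subr0 ?mul0r.
rewrite -mulr_sumr DO; [|lia|lia].
case: (eqVneq r s) => [<-|rs].
  rewrite eqxx /=; move: p0 n0' N0; rewrite natrM; generalize (@pi R) => p p0 n0' N0.
  by field; rewrite !gt_eqF // ?ltr0n.
have -> : (r - 2 * n == s - 2 * n)%N = false by apply/eqP; move/eqP: rs; lia.
by rewrite natr_false !mul0r !mulr0 subr0.
Qed.

Lemma Yortho (R : realType) n (y : nat -> R) h l : (0 < n)%N -> Yenum n y ->
  (h < 2 * n)%N -> (l < 2 * n)%N ->
  \sum_(n <= r < 3 * n) sigma n y r h.+1 * sigma n y r l.+1 = (h == l)%:R.
Proof.
move=> n0 Y hn ln.
pose S : 'M[R]_(2 * n) := \matrix_(i < 2 * n, j < 2 * n) sigma n y (i + n)%N j.+1.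
have SS1 : S *m S^T = 1%:M.
  apply/matrixP => i j; rewrite !mxE.
  rewrite (eq_bigr (fun k : 'I_(2 * n) => sigma n y (i + n)%N k.+1 * sigma n y (j + n)%N k.+1)); last first.
    by move=> k _; rewrite !mxE.
  rewrite SS //; [|have := ltn_ord i; lia|have := ltn_ord j; lia].
  have -> : ((i + n)%N == (j + n)%N) = (i == j) by rewrite eqn_add2r.
  by [].
have /matrixP/(_ (Ordinal hn) (Ordinal ln)) := mulmx1C SS1.
rewrite !mxE /=.
rewrite (eq_bigr (fun k : 'I_(2 * n) => sigma n y (k + n)%N h.+1 * sigma n y (k + n)%N l.+1)); last first.
  by move=> k _; rewrite !mxE.
move=> <-.
rewrite -{1}(add0n n) big_addn (_ : (3 * n - n = 2 * n)%N); last lia.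
by rewrite big_mkord.
Qed.


Lemma ip_ext (R : realType) M (f g G : R -> R) :
  (forall x, -1 <= x <= 1 -> f x = g x) -> ip M f G = ip M g G.
Proof.
move=> H; rewrite /ip; congr (_ * _); apply: eq_bigr => k _.
by rewrite H // /node cos_geN1 cos_le1.
Qed.

Arguments ip_ext {R M f g G}.

Lemma ip_extr (R : realType) M (f g G : R -> R) :
  (forall x, -1 <= x <= 1 -> f x = g x) -> ip M G f = ip M G g.
Proof. by move=> H; rewrite ipC (ip_ext H) ipC. Qed.
Arguments ip_extr {R M f g G}.

Lemma sum_ord_delta (R : realType) n (F : 'I_n -> R) (k : 'I_n) :
  \sum_(l < n) F l * (k == l :> nat)%:R = F k.
Proof.
rewrite (bigD1 k) //= eqxx mulr1 big1 ?addr0 // => l lk.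
have -> : (k == l :> nat) = false by apply/negbTE; rewrite eq_sym.
by rewrite mulr0.
Qed.

Theorem theorem4 (R : realType) (n m : nat) (y : nat -> R)
    (fn gn f3n : R -> R)
    (an : 'cV[R]_n) (bn : 'cV[R]_(2 * n)) (a3n : 'cV[R]_(3 * n)) :
  (0 < m < n)%N ->
  Yenum n y ->
  (forall x, -1 <= x <= 1 ->
     fn x = \sum_(k < n) an k ord0 * phi n m k.+1 x) ->
  (forall x, -1 <= x <= 1 ->
     gn x = \sum_(h < 2 * n) bn h ord0 * psi n m y h.+1 x) ->
  (forall x, -1 <= x <= 1 ->
     f3n x = \sum_(j < 3 * n) a3n j ord0 * phi (3 * n) m j.+1 x) ->
  (forall x, -1 <= x <= 1 -> f3n x = fn x + gn x) ->
  an = Amat n m *m a3n /\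
  bn = Bmat n m y *m a3n /\
  a3n = (Amat n m)^T *m an + (Bmat n m y)^T *m bn.
Proof.
move=> hm Y Hf Hg H3 Hs; have /andP[m0 mn] := hm.
have n0 : (0 < n)%N by lia.
have dec : forall G, ip (4 * n) G f3n = ip (4 * n) G fn + ip (4 * n) G gn.
  move=> G; rewrite (ip_extr Hs) /ip -mulrDr -big_split /=.
  by congr (_ * _); apply: eq_bigr => k _; rewrite mulrDr.
have Efn : forall G, ip (4 * n) G fn = \sum_(k < n) an k ord0 * ip (4 * n) G (phi n m k.+1).
  by move=> G; rewrite (ip_extr Hf) ip_sumZr.
have Egn : forall G, ip (4 * n) G gn = \sum_(h < 2 * n) bn h ord0 * ip (4 * n) G (psi n m y h.+1).
  by move=> G; rewrite (ip_extr Hg) ip_sumZr.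
have E3n : forall G, ip (4 * n) G f3n = \sum_(j < 3 * n) a3n j ord0 * ip (4 * n) G (phi (3 * n) m j.+1).
  by move=> G; rewrite (ip_extr H3) ip_sumZr.
split; [|split].
- apply/matrixP => k i; rewrite (ord1 i) !mxE.
  rewrite (eq_bigr (fun j : 'I_(3 * n) => a3n j ord0 * ip (4 * n) (phi n m k.+1) (phi (3 * n) m j.+1))); last first.
    by move=> j _; rewrite !mxE ipA // mulrC.
  rewrite -E3n dec Efn Egn [X in _ + X]big1 ?addr0; last first.
    by move=> h _; rewrite ipC ip_psiphi // mulr0.
  rewrite (eq_bigr (fun l : 'I_n => an l ord0 * (k == l :> nat)%:R)); last first.
    by move=> l _; rewrite ip_phiphi //; lia.
  by rewrite sum_ord_delta.
- apply/matrixP => h i; rewrite (ord1 i) !mxE.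
  rewrite (eq_bigr (fun j : 'I_(3 * n) => a3n j ord0 * ip (4 * n) (psi n m y h.+1) (phi (3 * n) m j.+1))); last first.
    by move=> j _; rewrite !mxE -ipB // ipC mulrC.
  rewrite -E3n dec Efn Egn [X in X + _]big1 ?add0r; last first.
    by move=> k _; rewrite ip_psiphi // mulr0.
  rewrite (eq_bigr (fun l : 'I_(2 * n) => bn l ord0 * (h == l :> nat)%:R)); last first.
    by move=> l _; rewrite ip_psipsi // Yortho.
  by rewrite sum_ord_delta.
- apply/matrixP => j i; rewrite (ord1 i) !mxE.
  rewrite (eq_bigr (fun k : 'I_n => an k ord0 * ip (4 * n) (phi n m k.+1) (phi (3 * n) m j.+1))); last first.
    by move=> k _; rewrite !mxE ipA // mulrC.
  rewrite (eq_bigr (fun h : 'I_(2 * n) => bn h ord0 * ip (4 * n) (psi n m y h.+1) (phi (3 * n) m j.+1))); last first.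
    by move=> h _; rewrite !mxE -ipB // ipC mulrC.
  have e1 : \sum_(k < n) an k ord0 * ip (4 * n) (phi n m k.+1) (phi (3 * n) m j.+1) =
            ip (4 * n) (phi (3 * n) m j.+1) fn.
    by rewrite Efn; apply: eq_bigr => k _; rewrite ipC.
  have e2 : \sum_(h < 2 * n) bn h ord0 * ip (4 * n) (psi n m y h.+1) (phi (3 * n) m j.+1) =
            ip (4 * n) (phi (3 * n) m j.+1) gn.
    by rewrite Egn; apply: eq_bigr => h _; rewrite ipC.
  rewrite e1 e2 -dec E3n.
  rewrite (eq_bigr (fun l : 'I_(3 * n) => a3n l ord0 * (j == l :> nat)%:R)); last first.
    by move=> l _; rewrite ip_phiphi //; lia.
  by rewrite sum_ord_delta.
Qed.
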